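(* Let $M$ and $N$ be objects of an abelian category $\mathcal{A}$. (1) Assume that every direct summand of $M$ is isomorphic to a subobject of $N$. Then $N$ is strongly $M$-Rickart if and only if $N$ is $M$-Rickart and $M$ is weak duo. (2) Assume that every direct summand of $N$ is isomorphic to a factor object of $M$. Then $N$ is dual strongly $M$-Rickart if and only if $N$ is dual $M$-Rickart and $N$ is weak duo.
   Context: A morphism $f:X\to Y$ is a section if $f'f=1_X$ for some $f':Y\to X$, and a retraction if $ff'=1_Y$ for some $f':Y\to X$. A monomorphism $k:K\to M$ is fully invariant if for every $h:M\to M$ there is $\alpha:K\to K$ with $hk=k\alpha$; an epimorphism $c:M\to C$ is fully coinvariant if for every $h:M\to M$ there is $\gamma:C\to C$ with $ch=\gamma c$. For objects $M,N$ of an abelian category: $N$ is $M$-Rickart if the kernel ${\rm ker}(f):{\rm Ker}(f)\to M$ of every morphism $f:M\to N$ is a section; $N$ is dual $M$-Rickart if the cokernel ${\rm coker}(f):N\to{\rm Coker}(f)$ of every morphism $f:M\to N$ is a retraction (equivalently the image ${\rm im}(f)$ is a section); $N$ is strongly $M$-Rickart if the kernel of every morphism $f:M\to N$ is a fully invariant section; $N$ is dual strongly $M$-Rickart if the cokernel of every morphism $f:M\to N$ is a fully coinvariant retraction (equivalently the image of every $f:M\to N$ is a fully invariant section). An object $M$ is weak duo if every section $K\to M$ is fully invariant (equivalently, every retraction $M\to C$ is fully coinvariant). *)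

(* Defs.v *)
From HB Require Import structures.
From mathcomp Require Import all_boot all_algebra.
Set Implicit Arguments.
Unset Strict Implicit.
Unset Printing Implicit Defensive.
Import GRing.Theory.
Local Open Scope ring_scope.

(** Preadditive categories: Hom-sets are abelian groups, composition is
    associative, unital and bilinear. [comp g f] is "g after f" (written gf). *)
Record PreaddCat : Type := {
  Obj :> Type;
  Hom : Obj -> Obj -> zmodType;
  comp : forall A B C : Obj, Hom B C -> Hom A B -> Hom A C;
  idm : forall A : Obj, Hom A A;
  comp_assoc : forall A B C D (h : Hom C D) (g : Hom B C) (f : Hom A B),
      comp h (comp g f) = comp (comp h g) f;
  comp_id_l : forall A B (f : Hom A B), comp (idm B) f = f;
  comp_id_r : forall A B (f : Hom A B), comp f (idm A) = f;
  comp_addl : forall A B C (g g' : Hom B C) (f : Hom A B),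
      comp (g + g') f = comp g f + comp g' f;
  comp_addr : forall A B C (g : Hom B C) (f f' : Hom A B),
      comp g (f + f') = comp g f + comp g f'
}.
Arguments Hom {C} : rename.
Arguments comp {C A B C0} : rename.
Arguments idm {C} : rename.

Section Notions.
Variable C : PreaddCat.

Definition mono {A B : C} (m : Hom A B) : Prop :=
  forall X (g g' : Hom X A), comp m g = comp m g' -> g = g'.
Definition epi {A B : C} (e : Hom A B) : Prop :=
  forall Y (g g' : Hom B Y), comp g e = comp g' e -> g = g'.

Definition section {X Y : C} (f : Hom X Y) : Prop :=
  exists f' : Hom Y X, comp f' f = idm X.
Definition retraction {X Y : C} (f : Hom X Y) : Prop :=
  exists f' : Hom Y X, comp f f' = idm Y.

Definition is_kernel {A B K : C} (f : Hom A B) (k : Hom K A) : Prop :=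
  comp f k = 0 /\
  forall X (g : Hom X A), comp f g = 0 ->
    exists u : Hom X K, comp k u = g /\ forall u' : Hom X K, comp k u' = g -> u' = u.
Definition is_cokernel {A B Q : C} (f : Hom A B) (c : Hom B Q) : Prop :=
  comp c f = 0 /\
  forall Y (g : Hom B Y), comp g f = 0 ->
    exists u : Hom Q Y, comp u c = g /\ forall u' : Hom Q Y, comp u' c = g -> u' = u.

Definition abelian : Prop :=
  (exists Z : C, forall A : C,
      (forall f g : Hom Z A, f = g) /\ (forall f g : Hom A Z, f = g)) /\
  (forall A B : C, exists (P : C) (i1 : Hom A P) (p1 : Hom P A)
                          (i2 : Hom B P) (p2 : Hom P B),
      [/\ comp p1 i1 = idm A, comp p2 i2 = idm B, comp p1 i2 = 0,
          comp p2 i1 = 0 & comp i1 p1 + comp i2 p2 = idm P]) /\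
  (forall (A B : C) (f : Hom A B), exists (K : C) (k : Hom K A), is_kernel f k) /\
  (forall (A B : C) (f : Hom A B), exists (Q : C) (c : Hom B Q), is_cokernel f c) /\
  (forall (A B : C) (m : Hom A B), mono m ->
      exists (Q : C) (g : Hom B Q), is_kernel g m) /\
  (forall (A B : C) (e : Hom A B), epi e ->
      exists (K : C) (g : Hom K A), is_cokernel g e).

Definition fully_invariant {K M : C} (k : Hom K M) : Prop :=
  forall h : Hom M M, exists alpha : Hom K K, comp h k = comp k alpha.
Definition fully_coinvariant {M Q : C} (c : Hom M Q) : Prop :=
  forall h : Hom M M, exists gamma : Hom Q Q, comp c h = comp gamma c.

Definition rickart (M N : C) : Prop :=
  forall (f : Hom M N) (K : C) (k : Hom K M), is_kernel f k -> section k.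
Definition dual_rickart (M N : C) : Prop :=
  forall (f : Hom M N) (Q : C) (c : Hom N Q), is_cokernel f c -> retraction c.
Definition strongly_rickart (M N : C) : Prop :=
  forall (f : Hom M N) (K : C) (k : Hom K M), is_kernel f k ->
    fully_invariant k /\ section k.
Definition dual_strongly_rickart (M N : C) : Prop :=
  forall (f : Hom M N) (Q : C) (c : Hom N Q), is_cokernel f c ->
    fully_coinvariant c /\ retraction c.
Definition weak_duo (M : C) : Prop :=
  forall (K : C) (k : Hom K M), section k -> fully_invariant k.

Definition summands_embed (M N : C) : Prop :=
  forall (K : C) (k : Hom K M), section k -> exists m : Hom K N, mono m.
Definition summands_factor (M N : C) : Prop :=
  forall (K : C) (k : Hom K N), section k -> exists e : Hom M K, epi e.

End Notions.

(* Main.v *)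
From mathcomp Require Import all_boot ssralg.
Require Import Defs.
Import GRing.Theory.
Local Open Scope ring_scope.

Section Aux.
Variable C : PreaddCat.

Lemma comp0l (A B D : C) (f : Hom A B) : comp (0 : Hom B D) f = 0.
Proof.
have := comp_addl (0 : Hom B D) 0 f. rewrite addr0 => H.
by apply: (addrI (comp (0 : Hom B D) f)); rewrite addr0 -H.
Qed.

Lemma comp0r (A B D : C) (g : Hom B D) : comp g (0 : Hom A B) = 0.
Proof.
have := comp_addr g (0 : Hom A B) 0. rewrite addr0 => H.
by apply: (addrI (comp g (0 : Hom A B))); rewrite addr0 -H.
Qed.

Lemma compBl (A B D : C) (g g' : Hom B D) (f : Hom A B) :
  comp (g - g') f = comp g f - comp g' f.
Proof.
apply: (addrI (comp g' f)).
by rewrite -comp_addl [g' + _]addrC subrK [comp g' f + _]addrC subrK.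
Qed.

Lemma compBr (A B D : C) (g : Hom B D) (f f' : Hom A B) :
  comp g (f - f') = comp g f - comp g f'.
Proof.
apply: (addrI (comp g f')).
by rewrite -comp_addr [f' + _]addrC subrK [comp g f' + _]addrC subrK.
Qed.

Lemma kernel_mono (A B K X : C) (f : Hom A B) (k : Hom K A) :
  is_kernel f k -> forall a b : Hom X K, comp k a = comp k b -> a = b.
Proof.
move=> [H1 H2] a b Hab.
have [u [_ Hu]] := H2 X (comp k a) ltac:(by rewrite comp_assoc H1 comp0l).
by rewrite (Hu a erefl) (Hu b (esym Hab)).
Qed.

Arguments kernel_mono {A B K X f k}.

Lemma complement (HC : abelian C) (A X : C) (s : Hom A X) (r : Hom X A) :
  comp r s = idm A ->
  exists (K' : C) (k' : Hom K' X) (u : Hom X K'),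
    [/\ comp k' u = idm X - comp s r, comp u k' = idm K',
        comp r k' = 0 & comp u s = 0].
Proof.
move=> Hrs.
have [_ [_ [Hker _]]] := HC.
have [K' [k' Hk]] := Hker _ _ (comp s r).
have Hk0 := Hk; case: Hk0 => [Hk1 Hk2].
have He : comp (comp s r) (idm X - comp s r) = 0.
  by rewrite compBr comp_id_r -!comp_assoc (comp_assoc r s r) Hrs comp_id_l subrr.
have [u [Hu _]] := Hk2 _ _ He.
exists K', k', u.
have Hrk : comp r k' = 0.
  by rewrite -(comp_id_l (comp r k')) -Hrs -comp_assoc (comp_assoc s r k') Hk1 !comp0r.
split=> //.
- apply: (kernel_mono Hk).
  by rewrite comp_id_r comp_assoc Hu compBl comp_id_l -comp_assoc Hrk comp0r subr0.
- apply: (kernel_mono Hk).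
  by rewrite comp0r comp_assoc Hu compBl comp_id_l -comp_assoc Hrs comp_id_r subrr.
Qed.

End Aux.
Arguments complement {C} HC {A X s r}.


Theorem proposition2p9 (C : PreaddCat) (HC : abelian C) (M N : C) :
  (summands_embed M N ->
     (strongly_rickart M N <-> rickart M N /\ weak_duo M)) /\
  (summands_factor M N ->
     (dual_strongly_rickart M N <-> dual_rickart M N /\ weak_duo N)).
Proof.
split=> Hsum; split.
- move=> Hs; split.
    by move=> f K k Hk; case: (Hs f K k Hk).
  move=> K k [r Hrk].
  have [K' [k' [u [Hku Huk Hrk' Huk0]]]] := complement HC Hrk.
  have [m' Hm] := Hsum K' k' (ex_intro _ u Huk).
  suff Hk : is_kernel (comp m' u) k by case: (Hs _ _ _ Hk).
  split; first by rewrite -comp_assoc Huk0 comp0r.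
  move=> X g Hg.
  have Hug : comp u g = 0.
    by apply: Hm; rewrite comp0r comp_assoc.
  exists (comp r g); split.
    have : comp (comp k' u) g = 0 by rewrite -comp_assoc Hug comp0r.
    rewrite Hku compBl comp_id_l comp_assoc => /eqP; rewrite subr_eq0 => /eqP.
    by move=> Hg'; rewrite {2}Hg' ?comp_assoc.
  by move=> u' <-; rewrite comp_assoc Hrk comp_id_l.
- move=> [Hr Hw] f K k Hk; split; last exact: (Hr f K k Hk).
  exact: (Hw K k (Hr f K k Hk)).
- move=> Hs; split.
    by move=> f Q c Hc; case: (Hs f Q c Hc).
  move=> K k [r Hrk] h.
  have [e He] := Hsum K k (ex_intro _ r Hrk).
  have [_ [_ [_ [Hcok _]]]] := HC.
  have [Q [c Hc]] := Hcok _ _ (comp k e).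
  have [Hfc _] := Hs _ _ _ Hc.
  have Hck : comp c k = 0.
    by apply: He; rewrite comp0l -comp_assoc; case: Hc.
  have [gam Hgam] := Hfc h.
  case: Hc => _ Hc2.
  have [v [Hv _]] := Hc2 _ (idm N - comp k r)
    ltac:(by rewrite compBl comp_id_l comp_assoc -(comp_assoc k r k) Hrk comp_id_r subrr).
  exists (comp r (comp h k)).
  have : comp (comp v c) (comp h k) = 0.
    by rewrite -comp_assoc (comp_assoc c h k) Hgam -comp_assoc Hck !comp0r.
  rewrite Hv compBl comp_id_l comp_assoc => /eqP; rewrite subr_eq0 => /eqP.
  by move=> E; rewrite {1}E !comp_assoc.
- move=> [Hr Hw] f Q c Hc; split; last exact: (Hr f Q c Hc).
  have [s Hcs] := Hr f Q c Hc.
  have [K' [k' [u [Hku Huk Hck' Hus]]]] := complement HC Hcs.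
  move=> h.
  have [al Hal] := Hw Q s (ex_intro _ c Hcs) h.
  have [be Hbe] := Hw K' k' (ex_intro _ u Huk) h.
  exists al.
  have Hid : idm N = comp s c + comp k' u by rewrite Hku addrC subrK.
  rewrite -(comp_id_r (comp c h)) Hid comp_addr.
  rewrite !comp_assoc -(comp_assoc c h s) Hal -(comp_assoc c h k') Hbe.
  rewrite !comp_assoc Hcs Hck' comp_id_l !comp0l. by apply: addr0.
Qed.
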